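(* Let $\mathbb{Q}^*_+$ act on the ring $\mathcal{A}_f$ of finite adeles by division, $r\cdot a=r^{-1}a$, and let $\mathcal{Q}(\mathcal{A}_f/\mathbb{Q}^*_+)$ be the quasi-orbit space of this action. For each $a\in\mathcal{A}_f$ define $S(a):=\{p\in\mathcal{P}: a_p=0\}$. Then $S(a)$ depends only on the quasi-orbit of $a$, and the map $a\mapsto S(a)$ induces a homeomorphism of $\mathcal{Q}(\mathcal{A}_f/\mathbb{Q}^*_+)$ onto the power set $2^{\mathcal{P}}$ equipped with the power-cofinite topology.
   Context: $\mathcal{P}$ is the set of prime numbers; $\mathcal{A}_f=\{(a_p)\in\prod_p\mathbb{Q}_p: a_p\in\mathbb{Z}_p \text{ for almost all } p\}$ is the ring of finite adeles with the restricted product topology (neighbourhood base at $0$ given by $\prod_{p\in F}V_p\times\prod_{p\notin F}\mathbb{Z}_p$, $F$ finite, $V_p$ a neighbourhood of $0$ in $\mathbb{Q}_p$), and $\mathbb{Q}$ is diagonally embedded. For a group $G$ acting on a space $X$, the quasi-orbit space $\mathcal{Q}(X/G)$ is the quotient of $X$ by the relation $x\sim y \iff \overline{G\cdot x}=\overline{G\cdot y}$, with the quotient topology. The power-cofinite topology on $2^{\mathcal{P}}$ has as basic open sets $U_G=\{T\subseteq\mathcal{P}: T\cap G=\emptyset\}$ for $G$ ranging over finite subsets of $\mathcal{P}$. *)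

(* Defs.v *)
From mathcomp Require Import all_boot all_order all_algebra.
From mathcomp Require Import boolp classical_sets cardinality.
Set Implicit Arguments. Unset Strict Implicit. Unset Printing Implicit Defensive.
Import Order.TTheory GRing.Theory Num.Theory.
Local Open Scope classical_set_scope.
Local Open Scope ring_scope.

Definition vp (p : nat) (q : rat) : int :=
  (logn p `|numq q|%N)%:Z - (logn p `|denq q|%N)%:Z.

(* [pclose p k q] : q lies in p^k Z_(p), i.e. |q|_p <= p^-k. *)
Definition pclose (p : nat) (k : int) (q : rat) : Prop := q = 0 \/ k <= vp p q.

Definition padic_cauchy (p : nat) (x : nat -> rat) : Prop :=
  forall k : int, exists N : nat, forall m n : nat, (N <= m)%N -> (N <= n)%N ->
    pclose p k (x m - x n).

Definition padic_null (p : nat) (x : nat -> rat) : Prop :=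
  forall k : int, exists N : nat, forall n : nat, (N <= n)%N -> pclose p k (x n).

Definition padic_equiv (p : nat) (x y : nat -> rat) : Prop :=
  padic_null p (fun n => x n - y n).

(* Q_p: equivalence classes of p-adic Cauchy sequences of rationals. *)
Record Qp (p : nat) := MkQp {
  Qp_set : set (nat -> rat);
  Qp_ax : exists x, padic_cauchy p x /\
            Qp_set = [set y | padic_cauchy p y /\ padic_equiv p x y] }.

Lemma pcloseN (p : nat) (k : int) (q : rat) : pclose p k (- q) <-> pclose p k q.
Proof.
rewrite /pclose /vp numqN denqN abszN.
by split => -[h|h]; [left; rewrite -[q]opprK h oppr0|right|left; rewrite h oppr0|right].
Qed.

Lemma Qp0_ax (p : nat) : exists x, padic_cauchy p x /\
  [set y | padic_cauchy p y /\ padic_null p y] =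
  [set y | padic_cauchy p y /\ padic_equiv p x y].
Proof.
exists (fun _ => 0); split.
  by move=> k; exists 0%N => m n _ _; left; rewrite subr0.
apply/seteqP; split => y [cy ny]; split => // k; have [N HN] := ny k;
  exists N => n /HN; rewrite ?sub0r pcloseN //.
Qed.

Definition Qp0 (p : nat) : Qp p := MkQp (Qp0_ax p).

(* [Qp_near p k a b] : b - a belongs to p^k Z_p *)
Definition Qp_near (p : nat) (k : int) (a b : Qp p) : Prop :=
  exists x y, Qp_set a x /\ Qp_set b y /\
    exists N : nat, forall n : nat, (N <= n)%N -> pclose p k (y n - x n).

Definition Qp_int (p : nat) (a : Qp p) : Prop := Qp_near 0 (Qp0 p) a.

Definition Qp_scale_rel (p : nat) (q : rat) (a b : Qp p) : Prop :=
  exists x y, Qp_set a x /\ Qp_set b y /\ padic_equiv p (fun n => q * x n) y.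

Definition prime_t := {p : nat | prime p}.

(* restricted product of the Q_p with respect to the Z_p *)
Record Af := MkAf {
  af_comp : forall p : prime_t, Qp (val p);
  af_restr : finite_set [set p : prime_t | ~ Qp_int (af_comp p)] }.

(* basic neighbourhood a + (prod_{p in F} p^{k p} Z_p x prod_{p notin F} Z_p) *)
Definition af_basic_nbhd (a : Af) (F : set prime_t) (k : prime_t -> int) : set Af :=
  [set b | forall p : prime_t,
     (F p -> Qp_near (k p) (af_comp a p) (af_comp b p)) /\
     (~ F p -> Qp_near 0 (af_comp a p) (af_comp b p))].

Definition af_open (O : set Af) : Prop :=
  forall a, O a -> exists F k, finite_set F /\ af_basic_nbhd a F k `<=` O.

Definition af_closure (X : set Af) : set Af :=
  [set b | forall O, af_open O -> O b -> exists c, O c /\ X c].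

Definition af_orbit (a : Af) : set Af :=
  [set b | exists r : rat, 0 < r /\
     forall p : prime_t, Qp_scale_rel r^-1 (af_comp a p) (af_comp b p)].

Definition quasi_orbit_rel (a b : Af) : Prop :=
  af_closure (af_orbit a) = af_closure (af_orbit b).

(* quasi-orbit space: equivalence classes, with the quotient topology *)
Record QOS := MkQOS {
  qos_set : set Af;
  qos_ax : exists a, qos_set = [set b | quasi_orbit_rel a b] }.

Definition qclass (a : Af) : QOS :=
  @MkQOS [set b | quasi_orbit_rel a b] (ex_intro _ a erefl).

Definition qos_open (U : set QOS) : Prop := af_open [set a | U (qclass a)].

Definition zero_set (a : Af) : set prime_t := [set p | af_comp a p = Qp0 (val p)].

Definition pc_open (V : set (set prime_t)) : Prop :=
  forall T, V T -> exists G : set prime_t, finite_set G /\ T `&` G = set0 /\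
    (forall T', T' `&` G = set0 -> V T').

(* Main.v *)
Require Import Defs.
From mathcomp Require Import all_boot all_order all_algebra.
From mathcomp Require Import boolp classical_sets cardinality.
From mathcomp Require Import zify ring lra.
Set Implicit Arguments. Unset Strict Implicit. Unset Printing Implicit Defensive.
Import Order.TTheory GRing.Theory Num.Theory.
Local Open Scope classical_set_scope.
Local Open Scope ring_scope.

Lemma vp_frac p (n d : int) : n != 0 -> d != 0 ->
  vp p (n%:~R / d%:~R) = (logn p `|n|)%:Z - (logn p `|d|)%:Z.
Proof.
move=> n0 d0; rewrite /vp; set r := _ / _.
have e : numq r * d = n * denq r.
  apply: (@intr_inj rat); rewrite !intrM numqE /r.
  by rewrite mulrAC divfK ?intr_eq0 // mulrC.
have := congr1 (fun z : int => logn p `|z|) e => /=.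
rewrite !abszM !lognM ?absz_gt0 ?denq_neq0 // ?numq_eq0 /r ?mulf_neq0 ?invr_eq0 ?intr_eq0 //.
lia.
Qed.

Lemma vp_int p (n : int) : vp p n%:~R = (logn p `|n|)%:Z.
Proof. by rewrite /vp numq_int denq_int /= logn1 subr0. Qed.

Lemma vp0 p : vp p 0 = 0.
Proof. by have := vp_int p 0; rewrite mulr0z /= logn0. Qed.

Lemma vpM p (a b : rat) : a != 0 -> b != 0 -> vp p (a * b) = vp p a + vp p b.
Proof.
move=> a0 b0.
rewrite -[a]divq_num_den -[b]divq_num_den mulf_div -!intrM.
have na : numq a != 0 by rewrite numq_eq0.
have nb : numq b != 0 by rewrite numq_eq0.
rewrite !vp_frac ?mulf_neq0 ?denq_neq0 // !abszM !lognM ?absz_gt0 ?denq_neq0 //.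
lia.
Qed.

Lemma vpV p (a : rat) : vp p a^-1 = - vp p a.
Proof.
have [->|a0] := eqVneq a 0; first by rewrite invr0 vp0 oppr0.
have na : numq a != 0 by rewrite numq_eq0.
rewrite -[a]divq_num_den invf_div !vp_frac ?denq_neq0 //; lia.
Qed.

Definition P (p : nat) : rat := p%:R.

Lemma P_neq0 p : prime p -> P p != 0.
Proof. by move=> pp; rewrite /P pnatr_eq0 -lt0n prime_gt0. Qed.

Lemma vpP p (k : int) : prime p -> vp p (P p ^ k) = k.
Proof.
move=> pp; case: k => n.
  by rewrite -exprnP /P -natrX pmulrn vp_int /= pfactorK.
rewrite NegzE -exprnN vpV.
by rewrite /P -natrX pmulrn vp_int /= pfactorK.
Qed.

Lemma P_expz_neq0 p (k : int) : prime p -> P p ^ k != 0.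
Proof. by move=> pp; rewrite expfz_neq0 // P_neq0. Qed.

Lemma pclose0 p k : pclose p k 0.
Proof. by left. Qed.

Lemma pclose_vp p q : pclose p (vp p q) q.
Proof. by right. Qed.

Lemma pclose_all p q : (forall k, pclose p k q) -> q = 0.
Proof.
move=> H; case: (H (vp p q + 1)) => // h; exfalso; move: h; rewrite lezD1 ltxx //.
Qed.

Lemma pclose_le p k k' q : k' <= k -> pclose p k q -> pclose p k' q.
Proof. by move=> le [->|h]; [left|right; apply: le_trans h]. Qed.

Lemma pclose0_frac p (n : int) (d : nat) : prime p -> ~~ (p %| d)%N ->
  pclose p 0 (n%:~R / d%:R).
Proof.
move=> pp nd; have [->|n0] := eqVneq n 0; first by rewrite mul0r; left.
have d0 : (d != 0)%N by apply: contraNneq nd => ->; rewrite dvdn0.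
right; rewrite -[d%:R]/((d%:Z)%:~R) vp_frac //=.
rewrite [logn p d]logn_coprime ?prime_coprime // subr0; exact: ler0n.
Qed.

Lemma pclose0P p (x : rat) : prime p -> pclose p 0 x ->
  exists (n : int) (d : nat), ~~ (p %| d)%N /\ x = n%:~R / d%:R.
Proof.
move=> pp [->|h]; first by exists 0, 1%N; split; [rewrite dvdn1; apply/eqP => p1; rewrite p1 in pp | rewrite mul0r].
exists (numq x), `|denq x|%N; split; last first.
  rewrite -[LHS]divq_num_den; congr (_ / _); rewrite pmulrn abszE ger0_norm // ltW // denq_gt0. 
apply/negP => pd.
have pn : ~~ (p %| `|numq x|)%N.
  apply/negP => pn; have := coprime_num_den x; rewrite /coprime => /eqP g.
  have : (p %| gcdn `|numq x| `|denq x|)%N by rewrite dvdn_gcd pn pd.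
  by rewrite g dvdn1 => /eqP p1; rewrite p1 in pp.
move: h; rewrite /vp logn_coprime ?prime_coprime //.
have : (0 < logn p `|denq x|)%N.
  by rewrite -pfactor_dvdn // ?expn1 // absz_gt0 denq_neq0.
lia.
Qed.

Lemma pclose0_add p a b : prime p -> pclose p 0 a -> pclose p 0 b -> pclose p 0 (a + b).
Proof.
move=> pp /(pclose0P pp) [n1 [d1 [h1 ->]]] /(pclose0P pp) [n2 [d2 [h2 ->]]].
have d10 : d1%:R != 0 :> rat by rewrite pnatr_eq0; apply: contraNneq h1 => ->; rewrite dvdn0.
have d20 : d2%:R != 0 :> rat by rewrite pnatr_eq0; apply: contraNneq h2 => ->; rewrite dvdn0.
rewrite addf_div // -natrM.
have -> : n1%:~R * d2%:R + n2%:~R * d1%:R = (n1 * d2%:Z + n2 * d1%:Z)%:~R :> rat.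
  by rewrite intrD !intrM.
by apply: pclose0_frac => //; rewrite Euclid_dvdM // negb_or h1 h2.
Qed.

Lemma pclose0_mul p a b : prime p -> pclose p 0 a -> pclose p 0 b -> pclose p 0 (a * b).
Proof.
move=> pp /(pclose0P pp) [n1 [d1 [h1 ->]]] /(pclose0P pp) [n2 [d2 [h2 ->]]].
rewrite mulf_div -natrM -intrM.
by apply: pclose0_frac => //; rewrite Euclid_dvdM // negb_or h1 h2.
Qed.

Lemma pclose0_int p (n : int) : prime p -> pclose p 0 n%:~R.
Proof.
move=> pp; have := pclose0_frac n pp (_ : ~~ (p %| 1)%N).
by rewrite divr1; apply; rewrite dvdn1; apply/eqP => p1; rewrite p1 in pp.
Qed.

Lemma pcloseE p k x : prime p -> pclose p k x <-> pclose p 0 (x / P p ^ k).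
Proof.
move=> pp; have [->|x0] := eqVneq x 0; first by rewrite mul0r; split; left.
have e : vp p (x / P p ^ k) = vp p x - k.
  by rewrite vpM ?invr_eq0 ?P_expz_neq0 // vpV vpP.
have x1 : x / P p ^ k != 0 by rewrite mulf_neq0 ?invr_eq0 ?P_expz_neq0.
rewrite /pclose e subr_ge0; split => -[h|h]; try by right.
  by rewrite h eqxx in x0.
by rewrite h eqxx in x1.
Qed.

Lemma pclose_add p k a b : prime p -> pclose p k a -> pclose p k b -> pclose p k (a + b).
Proof. by move=> pp /(pcloseE _ _ pp) h1 /(pcloseE _ _ pp) h2; apply/(pcloseE _ _ pp); rewrite mulrDl; apply: pclose0_add. Qed.

Lemma pclose_opp p k a : pclose p k (- a) <-> pclose p k a.
Proof. exact: pcloseN. Qed.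

Lemma pclose_sub p k a b : prime p -> pclose p k a -> pclose p k b -> pclose p k (a - b).
Proof. by move=> pp h1 h2; apply: pclose_add => //; apply/pclose_opp. Qed.

Lemma pclose_mul p k1 k2 a b : prime p -> pclose p k1 a -> pclose p k2 b -> pclose p (k1 + k2) (a * b).
Proof.
move=> pp /(pcloseE _ _ pp) h1 /(pcloseE _ _ pp) h2; apply/(pcloseE _ _ pp).
rewrite expfzDr ?P_neq0 // invfM mulrACA.
by apply: pclose0_mul.
Qed.

Lemma pclose_Pexp p (k : int) : prime p -> pclose p k (P p ^ k).
Proof. by move=> pp; right; rewrite vpP. Qed.

Lemma pclose_nat_exp p (n : nat) : prime p -> pclose p 0 (P p ^+ n).
Proof. by move=> pp; rewrite /P -natrX pmulrn; apply: pclose0_int. Qed.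

Lemma vp_ge_pclose p k x : x != 0 -> pclose p k x -> k <= vp p x.
Proof. by move=> x0 [h|//]; rewrite h eqxx in x0. Qed.

Lemma vp_addr p a d : prime p -> a != 0 -> pclose p (vp p a + 1) d ->
  a + d != 0 /\ vp p (a + d) = vp p a.
Proof.
move=> pp a0 hd.
have ha : ~ pclose p (vp p a + 1) a.
  by case => [h|]; [rewrite h eqxx in a0|rewrite lezD1 ltxx].
have s : a + d != 0.
  apply/negP => /eqP e; apply: ha; have e' : - d = a by rewrite -[a]subr0 -e; ring.
  by rewrite -[X in pclose _ _ X]e'; apply/pclose_opp.
split => //.
have h1 : pclose p (vp p a) (a + d).
  apply: pclose_add => //; first exact: pclose_vp.
  by apply: pclose_le hd; rewrite lerDl.
apply/eqP; rewrite eq_le (vp_ge_pclose s h1) andbT.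
rewrite leNgt; apply/negP => lt; apply: ha.
have e' : (a + d) - d = a by ring.
rewrite -[X in pclose _ _ X]e'.
apply: pclose_sub => //; right; by rewrite lezD1.
Qed.

Lemma approx1 (p : nat) (w : rat) (m : int) : prime p ->
  exists s : rat, pclose p m (s - w) /\ (forall l, prime l -> l != p -> pclose l 0 s).
Proof.
move=> pp.
have d0 : (0 < `|denq w|)%N by rewrite absz_gt0 denq_neq0.
have [d' cd' dE] := pfactor_coprime pp d0.
set e := logn p _ in dE.
set G := (`|m| + e)%N.
have cop : coprime d' (p ^ G) by rewrite coprimeXr // coprime_sym.
have [u [v uv]] := Bezoutz d'%:Z (p ^ G)%:Z.
have g1 : gcdz d'%:Z (p ^ G)%:Z = 1 by rewrite /gcdz /=; move: cop => /eqP ->.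
rewrite g1 in uv.
have d'0 : d'%:R != 0 :> rat.
  by rewrite pnatr_eq0; apply/eqP => h; move: dE; rewrite h mul0n => /eqP; rewrite absz_eq0 denq_eq0.
have P0 := P_neq0 pp.
have wE : w = (numq w)%:~R / (d'%:R * P p ^+ e).
  rewrite -[LHS]divq_num_den; congr (_ / _).
  by rewrite /P -natrX -natrM -dE pmulrn abszE ger0_norm // ltW // denq_gt0.
have uvq : u%:~R * d'%:R + v%:~R * P p ^+ G = 1 :> rat.
  have := congr1 (fun z : int => z%:~R : rat) uv => /=.
  by rewrite intrD !intrM /P -natrX !pmulrn.
have hu : u%:~R = (1 - v%:~R * P p ^+ G) / d'%:R :> rat.
  by rewrite -[X in (X - _) / _]uvq addrK mulfK.
set n := numq w in wE *.
exists ((n * u)%:~R / P p ^+ e); split.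
  have key : (n * u)%:~R / P p ^+ e - w =
      ((- (n * v))%:~R / d'%:R) * (P p ^+ G / P p ^+ e).
    rewrite [in LHS]wE intrM hu intrN intrM.
    by field; rewrite d'0 expf_neq0.
  rewrite key.
  apply: (@pclose_le _ (0 + (G%:Z - e%:Z))); first by lia.
  apply: pclose_mul => //; first by apply: pclose0_frac => //; rewrite -prime_coprime.
  have -> : P p ^+ G / P p ^+ e = P p ^ (G%:Z - e%:Z) by rewrite expfzDr // -exprnN.
  exact: pclose_Pexp.
move=> l pl lp; rewrite /P -natrX; apply: pclose0_frac => //.
by rewrite Euclid_dvdX // dvdn_prime2 // (negPf lp).
Qed.

Lemma pclose_dvd p (k n : nat) : prime p -> (p ^ k %| n)%N -> pclose p k n%:R.
Proof.
move=> pp dk; have [->|n0] := eqVneq n 0%N; first by left.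
right; rewrite pmulrn vp_int /=; rewrite pfactor_dvdn ?lt0n // in dk; lia.
Qed.

Definition PiL (L : seq nat) (M : nat -> int) : nat := (\prod_(p <- L) p ^ `|M p|)%N.

Lemma PiL_dvd L M p : p \in L -> (p ^ `|M p| %| PiL L M)%N.
Proof. by move=> pL; rewrite /PiL (big_rem _ pL) /= dvdn_mulr. Qed.

Lemma PiL_gt0 L M : all prime L -> (0 < PiL L M)%N.
Proof.
move=> /allP aL; rewrite /PiL big_seq; apply: prodn_cond_gt0 => i /aL pi.
by rewrite expn_gt0 prime_gt0.
Qed.

Lemma approxL (L : seq nat) (t : nat -> rat) (M : nat -> int) : all prime L -> uniq L ->
  exists q : rat, (forall p, p \in L -> pclose p (M p) (q - t p)) /\
     (forall l, prime l -> l \notin L -> pclose l 0 q).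
Proof.
elim: L => [|p0 L IH] /=.
  by move=> _ _; exists 0; split => // l _ _; left.
move=> /andP [pp0 aL] /andP [p0L uL].
have [q [hq1 hq2]] := IH aL uL.
set Pi := PiL L M.
have Pi0 : Pi%:R != 0 :> rat.
  by rewrite pnatr_eq0 -lt0n PiL_gt0.
have [s [hs1 hs2]] := approx1 ((t p0 - q) / Pi%:R) (M p0) pp0.
exists (q + Pi%:R * s); split.
  move=> p; rewrite inE => /orP [/eqP ->|pL].
    have -> : q + Pi%:R * s - t p0 = Pi%:R * (s - (t p0 - q) / Pi%:R) by field.
    rewrite -[M p0]add0r; apply: pclose_mul => //.
    by rewrite pmulrn; apply: pclose0_int.
  have pp : prime p by move/allP: aL => /(_ _ pL).
  have -> : q + Pi%:R * s - t p = (q - t p) + Pi%:R * s by ring.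
  apply: pclose_add => //; first exact: hq1.
  apply: (@pclose_le _ (`|M p|%:Z + 0)); first by lia.
  apply: pclose_mul => //; first by apply: pclose_dvd => //; apply: PiL_dvd.
  by apply: hs2 => //; apply: contraNneq p0L => <-.
move=> l pl; rewrite inE negb_or => /andP [lp0 lL].
apply: pclose0_add => //; first exact: hq2.
rewrite -[0]addr0; apply: pclose_mul => //; first by rewrite pmulrn; apply: pclose0_int.
exact: hs2.
Qed.

Lemma approxLpos (L : seq nat) (t : nat -> rat) (M : nat -> int) : all prime L -> uniq L ->
  exists q : rat, 0 < q /\ (forall p, p \in L -> pclose p (M p) (q - t p)) /\
     (forall l, prime l -> l \notin L -> pclose l 0 q).
Proof.
move=> aL uL; have [q [hq1 hq2]] := approxL t M aL uL.
set j := (`|numq q|.+1 * PiL L M)%N.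
exists (q + j%:R); split; [|split].
- have h1 : `|q| <= (`|numq q|%N)%:R.
    rewrite natr_absz intr_norm numqE normrM ler_peMr //.
    rewrite gtr0_norm ?ltr0z ?denq_gt0 // ler1z; have := denq_gt0 q; lia.
  have h2 : (`|numq q|.+1)%:R <= j%:R :> rat.
    by rewrite ler_nat /j leq_pmulr // PiL_gt0.
  have h3 : - `|q| <= q by apply: lerNnormlW.
  rewrite -addn1 natrD in h2; lra.
- move=> p pL; have pp : prime p by move/allP: aL => /(_ _ pL).
  have -> : q + j%:R - t p = (q - t p) + j%:R by ring.
  apply: pclose_add => //; first exact: hq1.
  apply: (@pclose_le _ `|M p|%:Z); first by lia.
  by apply: pclose_dvd => //; rewrite /j dvdn_mull // PiL_dvd.
- move=> l pl lL; apply: pclose0_add => //; first exact: hq2.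
  by rewrite pmulrn; apply: pclose0_int.
Qed.

Definition ev p k (z : nat -> rat) := exists N, forall n, (N <= n)%N -> pclose p k (z n).

Section Seqs.
Variable p : nat.
Hypothesis pp : prime p.

Lemma ev_add k z1 z2 : ev p k z1 -> ev p k z2 -> ev p k (fun n => z1 n + z2 n).
Proof.
move=> [N1 h1] [N2 h2]; exists (maxn N1 N2) => n hn.
by apply: pclose_add => //; [apply: h1|apply: h2]; lia.
Qed.

Lemma ev_opp k z : ev p k z -> ev p k (fun n => - z n).
Proof. by move=> [N h]; exists N => n /h /pclose_opp. Qed.

Lemma ev_sub k z1 z2 : ev p k z1 -> ev p k z2 -> ev p k (fun n => z1 n - z2 n).
Proof. by move=> h1 h2; apply: ev_add => //; apply: ev_opp. Qed.

Lemma ev_le k k' z : k' <= k -> ev p k z -> ev p k' z.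
Proof. by move=> le [N h]; exists N => n /h; apply: pclose_le. Qed.

Lemma ev_scale k K c z : pclose p K c -> ev p k z -> ev p (K + k) (fun n => c * z n).
Proof. by move=> hc [N h]; exists N => n /h; apply: pclose_mul. Qed.

Lemma ev_ext k z1 z2 : (forall n, z1 n = z2 n) -> ev p k z1 -> ev p k z2.
Proof. by move=> e [N h]; exists N => n /h; rewrite e. Qed.

Lemma ev_cst k c : pclose p k c -> ev p k (fun _ => c).
Proof. by move=> h; exists 0%N. Qed.

Lemma null_add z1 z2 : padic_null p z1 -> padic_null p z2 -> padic_null p (fun n => z1 n + z2 n).
Proof. by move=> h1 h2 k; apply: ev_add. Qed.

Lemma null_opp z : padic_null p z -> padic_null p (fun n => - z n).
Proof. by move=> h k; apply: ev_opp. Qed.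

Lemma null_sub z1 z2 : padic_null p z1 -> padic_null p z2 -> padic_null p (fun n => z1 n - z2 n).
Proof. by move=> h1 h2 k; apply: ev_sub. Qed.

Lemma null_ext z1 z2 : (forall n, z1 n = z2 n) -> padic_null p z1 -> padic_null p z2.
Proof. by move=> e h k; apply: ev_ext (h k). Qed.

Lemma null_scale c z : padic_null p z -> padic_null p (fun n => c * z n).
Proof.
move=> h k; have := ev_scale (pclose_vp p c) (h (k - vp p c)).
by apply: ev_le; rewrite addrC subrK.
Qed.

Lemma null0 : padic_null p (fun _ => 0).
Proof. by move=> k; exists 0%N => n _; left. Qed.

Lemma equiv_refl x : padic_equiv p x x.
Proof. by apply: null_ext null0 => n; rewrite subrr. Qed.

Lemma equiv_sym x y : padic_equiv p x y -> padic_equiv p y x.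
Proof. by move=> h; apply: null_ext (null_opp h) => n; rewrite opprB. Qed.

Lemma equiv_trans x y z : padic_equiv p x y -> padic_equiv p y z -> padic_equiv p x z.
Proof. by move=> h1 h2; apply: null_ext (null_add h1 h2) => n /=; ring. Qed.

Lemma null_equiv x y : padic_equiv p x y -> padic_null p x -> padic_null p y.
Proof. by move=> h1 h2; apply: null_ext (null_sub h2 h1) => n /=; ring. Qed.

Lemma cauchy_const c : padic_cauchy p (fun _ => c).
Proof. by move=> k; exists 0%N => m n _ _; left; rewrite subrr. Qed.

Lemma cauchy_scale c x : padic_cauchy p x -> padic_cauchy p (fun n => c * x n).
Proof.
move=> h k; have [N hN] := h (k - vp p c); exists N => m n hm hn.
rewrite -mulrBr; have := pclose_mul pp (pclose_vp p c) (hN m n hm hn).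
by apply: pclose_le; rewrite addrC subrK.
Qed.

Lemma cauchy_ev x k : padic_cauchy p x -> exists N, forall m, (N <= m)%N -> ev p k (fun n => x n - x m).
Proof. by move=> h; have [N hN] := h k; exists N => m hm; exists N => n hn; apply: hN. Qed.

Lemma cauchy_bounded x : padic_cauchy p x -> exists B, ev p B x.
Proof.
move=> h; have [N hN] := h 0; exists (- `|vp p (x N)|); exists N => n hn.
have -> : x n = (x n - x N) + x N by ring.
apply: pclose_add => //.
  by apply: pclose_le (hN n N hn (leqnn N)); lia.
by apply: pclose_le (pclose_vp p (x N)); lia.
Qed.

End Seqs.

Section QpTheory.
Variable p : nat.
Hypothesis pp : prime p.

Lemma Qp_ext (a b : Qp p) : Qp_set a = Qp_set b -> a = b.
Proof.
case: a => sa ha; case: b => sb hb /= e; subst sb.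
by congr MkQp; apply: Prop_irrelevance.
Qed.

Lemma Qp_cauchy (a : Qp p) x : Qp_set a x -> padic_cauchy p x.
Proof. case: a => sa ha /=; case: ha => x0 [c0 e]; rewrite e; by case. Qed.

Lemma Qp_ex (a : Qp p) : exists x, Qp_set a x.
Proof. case: a => sa ha /=; case: ha => x0 [c0 e]; rewrite e; exists x0; split => //; exact: equiv_refl. Qed.

Lemma memQ (a : Qp p) x y : Qp_set a x -> (Qp_set a y <-> padic_cauchy p y /\ padic_equiv p x y).
Proof.
case: a => sa ha /=; case: ha => x0 [c0 e]; rewrite e => -[cx ex]; split => -[cy ey]; split => //.
  exact: equiv_trans (equiv_sym ex) ey.
exact: equiv_trans ex ey.
Qed.

Lemma Qp_set_eq (a : Qp p) x : Qp_set a x -> Qp_set a = [set y | padic_cauchy p y /\ padic_equiv p x y].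
Proof. by move=> hx; apply/seteqP; split => y /=; rewrite (memQ _ hx). Qed.

Lemma Qp_eq (a b : Qp p) x y : Qp_set a x -> Qp_set b y -> padic_equiv p x y -> a = b.
Proof.
move=> hx hy e; apply: Qp_ext; rewrite (Qp_set_eq hx) (Qp_set_eq hy).
apply/seteqP; split => z /= [cz ez]; split => //.
  exact: equiv_trans (equiv_sym e) ez.
exact: equiv_trans e ez.
Qed.

Lemma Qp_eq_equiv (a : Qp p) x y : Qp_set a x -> Qp_set a y -> padic_equiv p x y.
Proof. by move=> hx /(memQ _ hx) []. Qed.

Lemma Qp0_set : Qp_set (Qp0 p) (fun _ => 0).
Proof. split; [exact: cauchy_const|exact: null0]. Qed.

Lemma Qp_zeroP (a : Qp p) x : Qp_set a x -> (a = Qp0 p <-> padic_null p x).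
Proof.
move=> hx; split.
  by move=> e; subst a; case: hx.
move=> nx; apply: (Qp_eq hx Qp0_set).
by apply: null_ext nx => n; rewrite subr0.
Qed.

Lemma nearP (a b : Qp p) k x y : Qp_set a x -> Qp_set b y ->
  (Qp_near k a b <-> ev p k (fun n => y n - x n)).
Proof.
move=> hx hy; split; last by move=> [N h]; exists x, y; split => //; split => //; exists N.
move=> [x' [y' [hx' [hy' [N h]]]]].
have ex := Qp_eq_equiv hx hx'; have ey := Qp_eq_equiv hy hy'.
have : ev p k (fun n => (y' n - x' n) + ((y n - y' n) - (x n - x' n))).
  apply: (ev_add pp); first by exists N.
  by apply: (ev_sub pp); [exact: ey|exact: ex].
by apply: ev_ext => n; ring.
Qed.

Lemma near_refl k (a : Qp p) : Qp_near k a a.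
Proof.
have [x hx] := Qp_ex a; apply/(nearP _ hx hx).
by exists 0%N => n _; rewrite subrr; left.
Qed.

Lemma near_sym k (a b : Qp p) : Qp_near k a b -> Qp_near k b a.
Proof.
have [x hx] := Qp_ex a; have [y hy] := Qp_ex b.
rewrite (nearP _ hx hy) (nearP _ hy hx) => h.
by apply: ev_ext (ev_opp h) => n; rewrite opprB.
Qed.

Lemma near_trans k (a b c : Qp p) : Qp_near k a b -> Qp_near k b c -> Qp_near k a c.
Proof.
have [x hx] := Qp_ex a; have [y hy] := Qp_ex b; have [z hz] := Qp_ex c.
rewrite (nearP _ hx hy) (nearP _ hy hz) (nearP _ hx hz) => h1 h2.
by apply: ev_ext (ev_add pp h2 h1) => n; ring.
Qed.

Lemma near_le k k' (a b : Qp p) : k' <= k -> Qp_near k a b -> Qp_near k' a b.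
Proof.
have [x hx] := Qp_ex a; have [y hy] := Qp_ex b.
by rewrite (nearP _ hx hy) (nearP _ hx hy) => le; apply: ev_le.
Qed.

Lemma Qp_intP (a : Qp p) x : Qp_set a x -> (Qp_int a <-> ev p 0 x).
Proof.
move=> hx; rewrite /Qp_int (nearP _ Qp0_set hx); split; apply: ev_ext => n; by rewrite subr0.
Qed.

Lemma near0_all (a : Qp p) : (forall k, Qp_near k a (Qp0 p)) -> a = Qp0 p.
Proof.
have [x hx] := Qp_ex a; move=> h; apply/(Qp_zeroP hx) => k.
have := h k; rewrite (nearP _ hx Qp0_set) => h'.
by apply: ev_ext (ev_opp h') => n; rewrite sub0r opprK.
Qed.

Lemma nonzero_sep (a : Qp p) : a <> Qp0 p -> exists k, forall b, Qp_near k a b -> b <> Qp0 p.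
Proof.
move=> a0; apply: contrapT => H; apply: a0; apply: near0_all => k.
apply: contrapT => nk; apply: H; exists k => b hb eb; apply: nk; by rewrite -eb.
Qed.

Definition cls (x : nat -> rat) (hx : padic_cauchy p x) : Qp p :=
  @MkQp p [set y | padic_cauchy p y /\ padic_equiv p x y] (ex_intro _ x (conj hx erefl)).

Lemma cls_set x (hx : padic_cauchy p x) : Qp_set (cls hx) x.
Proof. by split => //; apply: equiv_refl. Qed.

Definition rep (a : Qp p) : nat -> rat := projT1 (cid (Qp_ex a)).
Lemma rep_set a : Qp_set a (rep a).
Proof. exact: (projT2 (cid (Qp_ex a))). Qed.

Definition Qp_scale (q : rat) (a : Qp p) : Qp p :=
  cls (cauchy_scale pp q (Qp_cauchy (rep_set a))).

Lemma Qp_scale_set q a x : Qp_set a x -> Qp_set (Qp_scale q a) (fun n => q * x n).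
Proof.
move=> hx; apply/(memQ _ (cls_set _)); split; first exact: cauchy_scale (Qp_cauchy hx).
have e := Qp_eq_equiv (rep_set a) hx.
by apply: null_ext (null_scale pp q e) => n /=; ring.
Qed.

Lemma Qp_scale_rel_scale q a : Qp_scale_rel q a (Qp_scale q a).
Proof.
exists (rep a), (fun n => q * rep a n); split; first exact: rep_set.
split; [exact: Qp_scale_set (rep_set a)|exact: equiv_refl].
Qed.

Lemma Qp_scale_rel_zero r b : Qp_scale_rel r (Qp0 p) b -> b = Qp0 p.
Proof.
move=> [x [y [hx [hy e]]]]; apply/(Qp_zeroP hy).
apply: (null_equiv pp e); apply: (null_scale pp); by case: hx.
Qed.

Lemma Qp_scale0 q : Qp_scale q (Qp0 p) = Qp0 p.
Proof. apply: Qp_scale_rel_zero; exact: Qp_scale_rel_scale. Qed.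

Definition Qp_const (c : rat) : Qp p := cls (cauchy_const p c).

Lemma Qp_const_set c : Qp_set (Qp_const c) (fun _ => c).
Proof. exact: cls_set. Qed.

Lemma Qp_const_neq0 c : c != 0 -> Qp_const c <> Qp0 p.
Proof.
move=> c0 /(Qp_zeroP (Qp_const_set c)) h.
have [N hN] := h (vp p c + 1); case: (hN N (leqnn N)) => [e|]; first by rewrite e eqxx in c0.
by rewrite lezD1 ltxx.
Qed.


Lemma near0_const k c : pclose p k c -> Qp_near k (Qp0 p) (Qp_const c).
Proof.
move=> h; apply/(nearP _ Qp0_set (Qp_const_set c)).
by apply: ev_cst; rewrite subr0.
Qed.

End QpTheory.

Section Local.
Variable p : nat.
Hypothesis pp : prime p.

Lemma exact_val (x : nat -> rat) : padic_cauchy p x -> ~ padic_null p x ->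
  exists v N0, forall n, (N0 <= n)%N -> x n != 0 /\ vp p (x n) = v.
Proof.
move=> cx nx.
have [k0 nk0] : exists k0, ~ ev p k0 x.
  by apply: contrapT => H; apply: nx => k; apply: contrapT => h; apply: H; exists k.
have [N0 hN0] := cx k0.
have [n0 [hn0 nc]] : exists n0, (N0 <= n0)%N /\ ~ pclose p k0 (x n0).
  apply: contrapT => H; apply: nk0; exists N0 => n hn; apply: contrapT => h; apply: H.
  by exists n.
have x0 : x n0 != 0 by apply/negP => /eqP e; apply: nc; left.
have lt : vp p (x n0) < k0 by rewrite ltNge; apply/negP => h; apply: nc; right.
exists (vp p (x n0)), N0 => n hn.
have := @vp_addr p (x n0) (x n - x n0) pp x0.
have e : x n0 + (x n - x n0) = x n by ring.
rewrite e; apply; apply: pclose_le (hN0 n n0 hn hn0).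
by rewrite lezD1.
Qed.

Lemma local_approx (a c : Qp p) (K : int) : a <> Qp0 p ->
  exists t : rat, exists M : int, forall q, pclose p M (q - t) -> Qp_near K c (Qp_scale pp q a).
Proof.
move=> a0.
have [x hx] := Qp_ex a; have [y hy] := Qp_ex c.
have cx := Qp_cauchy hx; have cy := Qp_cauchy hy.
have nx : ~ padic_null p x by move=> h; apply: a0; apply/(Qp_zeroP pp hx).
have [v [N0 hv]] := exact_val cx nx.
have [B [N1 hB]] := cauchy_bounded pp cy.
have [N2 hN2] := cx (K - B + v).
have [N3 hN3] := cy K.
set N := maxn (maxn N0 N1) (maxn N2 N3).
have [xN0 vN] := hv N (leq_trans (leq_maxl _ _) (leq_maxl _ _)).
exists (y N / x N), (K - v) => q hq.
apply/(nearP pp K hy (Qp_scale_set pp q hx)).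
exists N => n hn.
have [xn0 vn] := hv n (leq_trans (leq_trans (leq_maxl _ _) (leq_maxl _ _)) hn).
have -> : q * x n - y n =
   (q - y N / x N) * x n + (y N * (x N)^-1) * (x n - x N) + (y N - y n).
  by field.
apply: pclose_add => //; [apply: pclose_add => //|].
- have := pclose_mul pp hq (pclose_vp p (x n)); rewrite vn.
  by apply: pclose_le; lia.
- have h1 : pclose p B (y N) by apply: hB; lia.
  have h2 : pclose p (- v) ((x N)^-1) by rewrite -vN -vpV; apply: pclose_vp.
  have h3 : pclose p (K - B + v) (x n - x N) by apply: hN2; lia.
  have := pclose_mul pp (pclose_mul pp h1 h2) h3.
  by apply: pclose_le; lia.
- by apply: hN3; lia.
Qed.

End Local.

Definition pr (p : prime_t) : prime (val p) := valP p.

Lemma finite_bounded (d : nat) : finite_set [set p : prime_t | (val p <= d)%N].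
Proof.
have -> : [set p : prime_t | (val p <= d)%N] = val @^-1` `I_d.+1.
  by apply/seteqP; split => x /=; rewrite ltnS.
apply: finite_preimage; last exact: finite_II.
by move=> x y _ _; apply: val_inj.
Qed.

Lemma nonint_q_finite (q : rat) : finite_set [set p : prime_t | ~ pclose (val p) 0 q].
Proof.
apply: (sub_finite_set _ (finite_bounded `|denq q|%N)) => p /= np.
have : (val p %| `|denq q|)%N.
  apply: contrapT => /negP nd; apply: np.
  have := pclose0_frac (numq q) (pr p) nd.
  by rewrite pmulrn abszE ger0_norm ?divq_num_den // ltW // denq_gt0.
by move/dvdn_leq; apply; rewrite absz_gt0 denq_neq0.
Qed.

Lemma Qp_int_scale p (pp : prime p) q (a : Qp p) : pclose p 0 q -> Qp_int a -> Qp_int (Qp_scale pp q a).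
Proof.
have [x hx] := Qp_ex a => hq /(Qp_intP pp hx) hi.
apply/(Qp_intP pp (Qp_scale_set pp q hx)).
by have := ev_scale pp hq hi; rewrite add0r.
Qed.

Lemma finU T (A B : set T) : finite_set A -> finite_set B -> finite_set (A `|` B).
Proof. by move=> hA hB; rewrite finite_setU. Qed.

Definition af_scale (q : rat) (a : Af) : Af.
Proof.
refine (@MkAf (fun p => Qp_scale (pr p) q (af_comp a p)) _).
apply: (sub_finite_set _ (finU (af_restr a) (nonint_q_finite q))).
move=> p /= ni; apply: contrapT => /not_orP [h1 h2]; apply: ni.
apply: Qp_int_scale; first exact: contrapT.
exact: contrapT.
Defined.

Lemma af_scale_comp q a p : af_comp (af_scale q a) p = Qp_scale (pr p) q (af_comp a p).
Proof. by []. Qed.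

Lemma Qp_int0 p (pp : prime p) : Qp_int (Qp0 p).
Proof. rewrite /Qp_int; exact: near_refl. Qed.

Lemma Qp_int_const p (pp : prime p) c : pclose p 0 c -> Qp_int (Qp_const p c).
Proof. by move=> h; apply/(Qp_intP pp (Qp_const_set p c)); apply: ev_cst. Qed.

Lemma pclose0_1 p : pclose p 0 1.
Proof. by right; have := vp_int p 1; rewrite mulr1z => ->; rewrite /= logn1. Qed.

Definition mkAf (T : set prime_t) : Af.
Proof.
refine (@MkAf (fun p => if pselect (T p) then Qp0 (val p) else Qp_const (val p) 1) _).
apply: (sub_finite_set _ (@finite_set0 prime_t)) => p /= ni; apply: ni.
case: (pselect (T p)) => h; first exact: (Qp_int0 (pr p)).
by apply: Qp_int_const; [exact: pr|exact: pclose0_1].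
Defined.

Lemma zero_set_mkAf T : zero_set (mkAf T) = T.
Proof.
apply/seteqP; split => p /=; rewrite /zero_set /=; case: (pselect (T p)) => // nT.
  by move=> e; exfalso; apply: (Qp_const_neq0 (pr p) (oner_neq0 _) e).
Qed.

Lemma basic_open c F k : finite_set F -> af_open (af_basic_nbhd c F k).
Proof.
move=> fF b hb; exists F, k; split => // d hd p.
have [h1 h2] := hb p; have [h3 h4] := hd p; split => Fp.
  exact: (@near_trans (val p) (pr p) (k p) _ _ _ (h1 Fp) (h3 Fp)).
exact: (@near_trans (val p) (pr p) 0 _ _ _ (h2 Fp) (h4 Fp)).
Qed.

Lemma basic_self c F k : af_basic_nbhd c F k c.
Proof. by move=> p; split => _; apply: (@near_refl (val p) (pr p)). Qed.

Definition nonint (a : Af) := [set p : prime_t | ~ Qp_int (af_comp a p)].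

Lemma approx_af (a c : Af) (F : set prime_t) (k : prime_t -> int) :
  zero_set a `<=` zero_set c -> finite_set F ->
  exists q : rat, 0 < q /\ af_basic_nbhd c F k (af_scale q a).
Proof.
move=> zac fF.
set E := F `|` nonint a `|` nonint c.
have fE : finite_set E by apply: finU; [apply: finU => //; exact: af_restr|exact: af_restr].
have [s sE] := (finite_seqP E).1 fE.
set L := undup (map val s).
have aL : all prime L by apply/allP => n; rewrite mem_undup => /mapP [p _ ->]; exact: pr.
have uL : uniq L by exact: undup_uniq.
pose Kp (p : prime_t) : int := if pselect (F p) then k p else 0.
have [f hf] : {f : prime_t -> rat * int & forall p, af_comp a p <> Qp0 (val p) ->
    forall q, pclose (val p) (f p).2 (q - (f p).1) ->
      Qp_near (Kp p) (af_comp c p) (Qp_scale (pr p) q (af_comp a p))}.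
  apply: (@choice _ _ (fun p tM => af_comp a p <> Qp0 (val p) ->
    forall q, pclose (val p) tM.2 (q - tM.1) ->
      Qp_near (Kp p) (af_comp c p) (Qp_scale (pr p) q (af_comp a p)))) => p.
  have [a0|a0] := pselect (af_comp a p = Qp0 (val p)).
    by exists (0, 0) => h; exfalso; apply: h.
  have [t [M h]] := local_approx (pr p) (af_comp c p) (Kp p) a0.
  by exists (t, M) => _.
pose t (n : nat) : rat := if (insub n : option prime_t) is Some p then (f p).1 else 0.
pose M (n : nat) : int := if (insub n : option prime_t) is Some p then (f p).2 else 0.
have [q [q0 [hq1 hq2]]] := approxLpos t M aL uL.
exists q; split => // p.
have tE : t (val p) = (f p).1 by rewrite /t valK.
have ME : M (val p) = (f p).2 by rewrite /M valK.
have key : E p -> Qp_near (Kp p) (af_comp c p) (af_comp (af_scale q a) p).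
  move=> Ep; rewrite af_scale_comp.
  have [a0|a0] := pselect (af_comp a p = Qp0 (val p)).
    have c0 : af_comp c p = Qp0 (val p) by apply: zac.
    rewrite a0 c0 Qp_scale0; exact: (@near_refl (val p) (pr p)).
  apply: hf => //; rewrite -tE -ME; apply: hq1.
  rewrite mem_undup; apply/mapP; exists p => //.
  by have : [set` s] p by rewrite -sE.
split => Fp.
  have := key (or_introl (or_introl Fp)); rewrite /Kp; by case: pselect.
have [Ep|nEp] := pselect (E p).
  have := key Ep; rewrite /Kp; by case: pselect.
have ia : Qp_int (af_comp a p) by apply: contrapT => h; apply: nEp; left; right.
have ic : Qp_int (af_comp c p) by apply: contrapT => h; apply: nEp; right.
have pL : val p \notin L.
  rewrite mem_undup; apply/negP => /mapP [p' p's e].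
  have ep : p = p' by apply: val_inj.
  by apply: nEp; rewrite sE /= ep.
have hq := hq2 _ (pr p) pL.
have [x hx] := Qp_ex (af_comp a p); have [y hy] := Qp_ex (af_comp c p).
rewrite af_scale_comp; apply/(nearP (pr p) 0 hy (Qp_scale_set (pr p) q hx)).
apply: (ev_sub (pr p)).
  by have := ev_scale (pr p) hq ((Qp_intP (pr p) hx).1 ia); rewrite add0r.
exact: (Qp_intP (pr p) hy).1 ic.
Qed.

Lemma closure_sub a c : af_closure (af_orbit a) c -> zero_set a `<=` zero_set c.
Proof.
move=> hc p ap; rewrite /zero_set /=.
apply: (@near0_all (val p) (pr p)) => K.
have fF : finite_set [set p] by exact: finite_set1.
have [d [Od [r [r0 hr]]]] := hc _ (@basic_open c [set p] (fun _ => K) fF) (basic_self c [set p] (fun _ => K)).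
have d0 : af_comp d p = Qp0 (val p).
  by apply: (@Qp_scale_rel_zero (val p) (pr p) r^-1); rewrite -ap; apply: hr.
by have [h _] := Od p; rewrite -d0; apply: h.
Qed.

Lemma closure_sup a c : zero_set a `<=` zero_set c -> af_closure (af_orbit a) c.
Proof.
move=> zac O oO Oc.
have [F [k [fF sub]]] := oO c Oc.
have [q [q0 hq]] := approx_af k zac fF.
exists (af_scale q a); split; first exact: sub.
exists q^-1; split; first by rewrite invr_gt0.
by move=> p; rewrite invrK af_scale_comp; apply: Qp_scale_rel_scale.
Qed.

Lemma closureE a c : af_closure (af_orbit a) c <-> zero_set a `<=` zero_set c.
Proof. by split; [apply: closure_sub|apply: closure_sup]. Qed.

Lemma relE a b : quasi_orbit_rel a b <-> zero_set a = zero_set b.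
Proof.
split.
  move=> e; apply/seteqP; split.
    have : af_closure (af_orbit a) b by rewrite e; apply/closureE.
    by move/closureE.
  have : af_closure (af_orbit b) a by rewrite -e; apply/closureE.
  by move/closureE.
move=> e; rewrite /quasi_orbit_rel; apply/funext => c; apply/propext.
by rewrite !closureE e.
Qed.

Lemma qos_ext (u v : QOS) : qos_set u = qos_set v -> u = v.
Proof.
case: u => su hu; case: v => sv hv /= e; subst sv.
by congr MkQOS; apply: Prop_irrelevance.
Qed.

Definition qrep (u : QOS) : Af := projT1 (cid (qos_ax u)).
Lemma qrepE u : qos_set u = [set b | quasi_orbit_rel (qrep u) b].
Proof. exact: (projT2 (cid (qos_ax u))). Qed.

Lemma qclass_eq a b : quasi_orbit_rel a b -> qclass a = qclass b.
Proof.
move=> e; apply: qos_ext => /=; apply/seteqP; split => c /=; rewrite /quasi_orbit_rel in e *.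
  by rewrite -e.
by rewrite e.
Qed.

Lemma qclass_rep u : qclass (qrep u) = u.
Proof. by apply: qos_ext; rewrite [RHS]qrepE. Qed.

Definition fS (u : QOS) : set prime_t := zero_set (qrep u).

Lemma fS_qclass a : fS (qclass a) = zero_set a.
Proof.
have h : qos_set (qclass a) (qrep (qclass a)).
  rewrite qrepE /=; reflexivity.
by rewrite /fS; move: h => /= /relE ->.
Qed.

Definition bcomp (a : Af) (T' : set prime_t) (k : prime_t -> int) (p : prime_t) : Qp (val p) :=
  if pselect (T' p) then Qp0 (val p)
  else if pselect (af_comp a p = Qp0 (val p)) then Qp_const (val p) (P (val p) ^+ `|k p|)
  else af_comp a p.

Definition mkB (a : Af) (T' : set prime_t) (k : prime_t -> int) : Af.
Proof.
refine (@MkAf (bcomp a T' k) _).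
apply: (sub_finite_set _ (af_restr a)) => p /= ni; apply: contrapT => ia; apply: ni.
rewrite /bcomp; case: (pselect (T' p)) => hT; first exact: (Qp_int0 (pr p)).
case: (pselect (af_comp a p = Qp0 (val p))) => ha; last exact: contrapT.
by apply: Qp_int_const; [exact: pr|exact: pclose_nat_exp (pr p)].
Defined.

Lemma zero_set_mkB a T' k : zero_set (mkB a T' k) = T'.
Proof.
apply/seteqP; split => p; rewrite /zero_set /= /bcomp; case: (pselect (T' p)) => // nT.
case: (pselect (af_comp a p = Qp0 (val p))) => // a0 e; exfalso.
apply: (Qp_const_neq0 (pr p) _ e).
by rewrite expf_neq0 // P_neq0 // pr.
Qed.

Theorem proposition2p4 :
  (forall a b : Af, quasi_orbit_rel a b -> zero_set a = zero_set b) /\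
  exists f : QOS -> set prime_t,
    (forall a : Af, f (qclass a) = zero_set a) /\
    bijective f /\
    (forall V : set (set prime_t), pc_open V -> qos_open (f @^-1` V)) /\
    (forall U : set QOS, qos_open U -> pc_open (f @` U)).
Proof.
split; first by move=> a b /relE.
exists fS; split; first exact: fS_qclass.
split.
  exists (fun T => qclass (mkAf T)).
    move=> u; rewrite -[RHS](qclass_rep u); apply: qclass_eq; apply/relE.
    by rewrite zero_set_mkAf.
  by move=> T; rewrite fS_qclass zero_set_mkAf.
split.
  move=> V hV a Va; have Va' : V (zero_set a) by rewrite -fS_qclass.
  have [G [fG [disj hG]]] := hV _ Va'.
  have [k hk] : {k : prime_t -> int & forall p, af_comp a p <> Qp0 (val p) ->
      forall b, Qp_near (k p) (af_comp a p) b -> b <> Qp0 (val p)}.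
    apply: (@choice _ _ (fun p kp => af_comp a p <> Qp0 (val p) ->
      forall b, Qp_near kp (af_comp a p) b -> b <> Qp0 (val p))) => p.
    have [a0|a0] := pselect (af_comp a p = Qp0 (val p)).
      by exists 0 => h; exfalso; apply: h.
    have [kp hkp] := nonzero_sep (pr p) a0.
    by exists kp => _.
  exists G, k; split => // b hb /=; rewrite fS_qclass; apply: hG.
  apply/seteqP; split => // p [bp Gp].
  have a0 : af_comp a p <> Qp0 (val p).
    move=> a0; have h : (zero_set a `&` G) p by split.
    by rewrite disj in h.
  have [h _] := hb p.
  exact: (hk p a0 _ (h Gp) bp).
move=> U hU T [u Uu <-].
set a := qrep u.
have Ua : [set a | U (qclass a)] a by rewrite /= qclass_rep.
have [F [k [fF sub]]] := hU a Ua.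
exists [set p | (F p \/ ~ Qp_int (af_comp a p)) /\ ~ zero_set a p].
split.
  apply: (sub_finite_set _ (finU fF (af_restr a))) => p [[h|h] _]; [by left|by right].
split.
  by apply/seteqP; split => // p [h1 [_ h2]].
move=> T' disj.
exists (qclass (mkB a T' k)); last by rewrite fS_qclass zero_set_mkB.
apply: sub => p; rewrite /= /bcomp.
case: (pselect (T' p)) => Tp /=.
  have nG : ~ ((F p \/ ~ Qp_int (af_comp a p)) /\ ~ zero_set a p).
    move=> h; have h' : (T' `&` [set p | (F p \/ ~ Qp_int (af_comp a p)) /\ ~ zero_set a p]) p by split.
    by rewrite disj in h'.
  have [za|nza] := pselect (zero_set a p).
    rewrite /zero_set /= in za; rewrite za.
    by split => _; apply: (@near_refl (val p) (pr p)).
  have nF : ~ F p by move=> Fp; apply: nG; split => //; left.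
  have ia : Qp_int (af_comp a p) by apply: contrapT => h; apply: nG; split => //; right.
  split => // _; exact: (@near_sym (val p) (pr p) 0 _ _ ia).
case: (pselect (af_comp a p = Qp0 (val p))) => a0 /=; last first.
  by split => _; apply: (@near_refl (val p) (pr p)).
rewrite a0; split => _; apply: (near0_const (pr p)).
  apply: pclose_le (@pclose_Pexp (val p) `|k p|%:Z (pr p)); lia.
exact: (pclose_nat_exp _ (pr p)).
Qed.
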